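(* Let $a\in\mathbb{R}$, $b\in(a,\infty)$, $h\in\mathbb{N}$, $v_1,\dots,v_h,w_1,\dots,w_h\in(0,\infty)$, let $f,p\in C(\mathbb{R},\mathbb{R})$ satisfy for all $x\in\mathbb{R}$ that $p(x)\ge0$ and $p^{-1}((0,\infty))=(a,b)$, with $\mathcal{N}^\theta$, $\mathcal{L}$, $I_i^\theta$, $\operatorname{Lip}$ as in the context. Assume that $f$ is non-decreasing and satisfies $\operatorname{Lip}(f)<\min_{i\in\{1,\dots,h\}}v_iw_i$, let $\vartheta\in\mathbb{R}^{h+1}$ satisfy $(\nabla\mathcal{L})(\vartheta)=0$, and let $V=\sup_{x\in(a,b)}\sum_{j\in\{1,\dots,h\},\,x\in I_j^\vartheta}v_j$. Then (i) for all $j\in\{1,\dots,h\}$, $x\in I_j^\vartheta$ it holds that $|\mathcal{N}^\vartheta(x)-f(x)|\le V$; (ii) for all $j,k\in\{1,\dots,h\}$ with $I_j^\vartheta\neq\emptyset\neq I_k^\vartheta$ and all $x\in[\sup I_j^\vartheta,\inf I_k^\vartheta]$ it holds that $|\mathcal{N}^\vartheta(x)-f(x)|\le V$; (iii) for all $j\in\{1,\dots,h\}$ with $I_j^\vartheta\neq\emptyset$ and all $x\in[\sup I_j^\vartheta,b]$ it holds that $|\mathcal{N}^\vartheta(x)-f(x)|\le\max\{V,|f(b)-\mathcal{N}^\vartheta(b)|\}$; and (iv) for all $j\in\{1,\dots,h\}$ with $I_j^\vartheta\neq\emptyset$ and all $x\in[a,\inf I_j^\vartheta]$ it holds that $|\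mathcal{N}^\vartheta(x)-f(x)|\le\max\{V,|f(a)-\mathcal{N}^\vartheta(a)|\}$.
   Context: Let $\mathfrak{c}(x)=\min\{\max\{x,0\},1\}$. For $F\in C(\mathbb{R},\mathbb{R})$ let $\operatorname{Lip}(F)=\sup_{x,y\in[a,b],x\ne y}\frac{|F(x)-F(y)|}{|x-y|}$. For $\theta=(\theta_1,\dots,\theta_{h+1})\in\mathbb{R}^{h+1}$ and $i\in\{1,\dots,h\}$ let $\psi_i(\theta)=-[w_i]^{-1}\theta_i$, $I_i^\theta=(\psi_i(\theta),\psi_i(\theta)+[w_i]^{-1})\cap(a,b)$, $\mathcal{N}^\theta(x)=\theta_{h+1}+\sum_{i=1}^hv_i\mathfrak{c}(w_ix+\theta_i)$, and $\mathcal{L}(\theta)=\int_a^b(\mathcal{N}^\theta(x)-f(x))^2p(x)\,\mathrm{d}x$ ($\mathcal{L}$ is continuously differentiable). *)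

(* Defs.v *)
From Stdlib Require Import Reals.
From Coquelicot Require Import Coquelicot.
Open Scope R_scope.

Definition clip (x : R) : R := Rmin (Rmax x 0) 1.

(* Parameters theta : nat -> R, only indices 1..h+1 are used;
   v w : nat -> R, only indices 1..h are used. *)

Definition psi (w theta : nat -> R) (i : nat) : R := - (/ w i) * theta i.

Definition inI (a b : R) (w theta : nat -> R) (i : nat) (x : R) : Prop :=
  psi w theta i < x < psi w theta i + / w i /\ a < x < b.

Definition NN (h : nat) (v w theta : nat -> R) (x : R) : R :=
  theta (S h) + sum_n (fun i => if Nat.eqb i 0 then 0
                                else v i * clip (w i * x + theta i)) h.

Definition LL (a b : R) (h : nat) (v w : nat -> R) (f p : R -> R)
  (theta : nat -> R) : R :=
  RInt (fun x => (NN h v w theta x - f x) ^ 2 * p x) a b.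

Definition upd (theta : nat -> R) (k : nat) (t : R) : nat -> R :=
  fun m => if Nat.eqb m k then theta m + t else theta m.

Definition grad_zero (a b : R) (h : nat) (v w : nat -> R) (f p : R -> R)
  (theta : nat -> R) : Prop :=
  forall k : nat, (1 <= k <= S h)%nat ->
    is_derive (fun t => LL a b h v w f p (upd theta k t)) 0 0.

Definition Lip (a b : R) (F : R -> R) : Rbar :=
  Lub_Rbar (fun r => exists x y, a <= x <= b /\ a <= y <= b /\ x <> y /\
                                 r = Rabs (F x - F y) / Rabs (x - y)).

Definition indI (a b : R) (w theta : nat -> R) (j : nat) (x : R) : R :=
  if Rlt_dec (psi w theta j) x then
    if Rlt_dec x (psi w theta j + / w j) then
      if Rlt_dec a x then if Rlt_dec x b then 1 else 0 else 0
    else 0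
  else 0.

(* V = sup_{x in (a,b)} sum_{j in 1..h, x in I_j} v_j  (finite: bounded by sum v_j) *)
Definition Vsup (a b : R) (h : nat) (v w theta : nat -> R) : R :=
  real (Lub_Rbar (fun r => exists x, a < x < b /\
     r = sum_n (fun j => if Nat.eqb j 0 then 0 else v j * indI a b w theta j x) h)).

(* sup and inf of I_j^theta (finite whenever I_j^theta is nonempty) *)
Definition supI (a b : R) (w theta : nat -> R) (j : nat) : R :=
  real (Lub_Rbar (inI a b w theta j)).
Definition infI (a b : R) (w theta : nat -> R) (j : nat) : R :=
  real (Glb_Rbar (inI a b w theta j)).

(* Main.v *)
Require Import Defs.
From Stdlib Require Import Reals Lra Lia.
From Coquelicot Require Import Coquelicot.
Open Scope R_scope.

Lemma clip_mono x y : x <= y -> clip x <= clip y.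
Proof. unfold clip, Rmin, Rmax; intros; repeat destruct Rle_dec; lra. Qed.
Lemma clip_lip x y : Rabs (clip x - clip y) <= Rabs (x - y).
Proof. unfold clip, Rmin, Rmax; repeat destruct Rle_dec; unfold Rabs; repeat destruct Rcase_abs; lra. Qed.
Lemma clip_id x : 0 <= x <= 1 -> clip x = x.
Proof. unfold clip, Rmin, Rmax; intros; repeat destruct Rle_dec; lra. Qed.
Lemma clip_0 x : x <= 0 -> clip x = 0.
Proof. unfold clip, Rmin, Rmax; intros; repeat destruct Rle_dec; lra. Qed.
Lemma clip_1 x : 1 <= x -> clip x = 1.
Proof. unfold clip, Rmin, Rmax; intros; repeat destruct Rle_dec; lra. Qed.
Lemma clip_bnd x : 0 <= clip x <= 1.
Proof. unfold clip, Rmin, Rmax; intros; repeat destruct Rle_dec; lra. Qed.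

Lemma sum_le_loc (F G : nat -> R) n :
  (forall i, (i <= n)%nat -> F i <= G i) -> sum_n F n <= sum_n G n.
Proof.
  induction n; intros H.
  - rewrite !sum_O; apply H; lia.
  - rewrite !sum_Sn. change (sum_n F n + F (S n) <= sum_n G n + G (S n)).
    pose proof (H (S n) (le_n _)). assert (sum_n F n <= sum_n G n) by (apply IHn; intros; apply H; lia). lra.
Qed.

Lemma sum_ext_R (F G : nat -> R) n :
  (forall i, (i <= n)%nat -> F i = G i) -> sum_n F n = sum_n G n.
Proof. apply sum_n_ext_loc. Qed.

Lemma sum_minus (F G : nat -> R) n :
  sum_n F n - sum_n G n = sum_n (fun i => F i - G i) n.
Proof.
  induction n.
  - rewrite !sum_O; auto.
  - rewrite !sum_Sn. change (sum_n F n + F (S n) - (sum_n G n + G (S n)) =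
       sum_n (fun i => F i - G i) n + (F (S n) - G (S n))). rewrite <- IHn; ring.
Qed.

Lemma sum_ge_single (F : nat -> R) n k :
  (forall i, (i <= n)%nat -> 0 <= F i) -> (k <= n)%nat -> F k <= sum_n F n.
Proof.
  induction n; intros H Hk.
  - rewrite sum_O. replace k with 0%nat by lia; lra.
  - rewrite sum_Sn. change (F k <= sum_n F n + F (S n)).
    destruct (Nat.eq_dec k (S n)).
    + subst. assert (0 <= sum_n F n).
      { replace 0 with (sum_n (fun _ => 0) n). apply sum_le_loc; intros; apply H; lia.
        clear. induction n. rewrite sum_O; auto. rewrite sum_Sn, IHn. change (0+0=0). ring. }
      lra.
    + assert (F k <= sum_n F n) by (apply IHn; [intros; apply H; lia| lia]).
      pose proof (H (S n) (le_n _)). lra.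
Qed.

Lemma sum_nonneg (F : nat -> R) n :
  (forall i, (i <= n)%nat -> 0 <= F i) -> 0 <= sum_n F n.
Proof. intros H. eapply Rle_trans; [apply (H 0%nat); lia| apply sum_ge_single; auto; lia]. Qed.

Lemma sum_change (F G : nat -> R) n k :
  (k <= n)%nat -> (forall i, (i <= n)%nat -> i <> k -> F i = G i) ->
  sum_n G n = sum_n F n + (G k - F k).
Proof.
  induction n; intros Hk H.
  - rewrite !sum_O. replace k with 0%nat by lia. change (G 0%nat = F 0%nat + (G 0%nat - F 0%nat)). ring.
  - rewrite !sum_Sn. change (sum_n G n + G (S n) = sum_n F n + F (S n) + (G k - F k)).
    destruct (Nat.eq_dec k (S n)).
    + subst. rewrite (sum_n_ext_loc G F n); [ring | intros; symmetry; apply H; lia].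
    + rewrite IHn by (try lia; intros; apply H; lia). rewrite (H (S n)) by lia. ring.
Qed.

Lemma lip_cont (F : R -> R) x K : 0 <= K ->
  (forall y, Rabs (F y - F x) <= K * Rabs (y - x)) -> continuity_pt F x.
Proof.
  intros HK H. unfold continuity_pt, continue_in, limit1_in, limit_in. simpl.
  intros eps Heps. exists (eps / (K + 1)). split.
  - apply Rdiv_lt_0_compat; lra.
  - intros y [_ Hy]. unfold R_dist in *. eapply Rle_lt_trans. apply H.
    apply Rle_lt_trans with ((K+1) * Rabs (y - x)).
    pose proof (Rabs_pos (y - x)); nra.
    replace eps with ((K+1) * (eps / (K+1))) by (field; lra).
    apply Rmult_lt_compat_l; lra.
Qed.

Lemma clip_aff_cont (c d x : R) : continuity_pt (fun y => clip (c * y + d)) x.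
Proof.
  apply lip_cont with (Rabs c). apply Rabs_pos.
  intros y. eapply Rle_trans. apply clip_lip.
  replace (c * y + d - (c * x + d)) with (c * (y - x)) by ring. rewrite Rabs_mult; lra.
Qed.

Lemma sum_cont (F : nat -> R -> R) n x :
  (forall i, (i <= n)%nat -> continuity_pt (F i) x) ->
  continuity_pt (fun y => sum_n (fun i => F i y) n) x.
Proof.
  induction n; intros H.
  - apply (continuity_pt_ext (F 0%nat)). intros y; rewrite sum_O; reflexivity. apply H; lia.
  - apply (continuity_pt_ext (fun y => sum_n (fun i => F i y) n + F (S n) y)). intros y; rewrite sum_Sn; reflexivity.
    apply continuity_pt_plus. apply IHn; intros; apply H; lia. apply H; lia.
Qed.

Lemma NN_cont h v w th x : continuity_pt (NN h v w th) x.
Proof.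
  unfold NN. apply continuity_pt_plus. apply continuity_pt_const; intros ??; auto.
  apply (sum_cont (fun i y => if Nat.eqb i 0 then 0 else v i * clip (w i * y + th i))).
  intros i _. destruct (Nat.eqb i 0).
  apply continuity_pt_const; intros ??; auto.
  apply continuity_pt_mult. apply continuity_pt_const; intros ??; auto. apply clip_aff_cont.
Qed.

Lemma NN_upd h v w th k t x : (1 <= k <= h)%nat ->
  NN h v w (upd th k t) x = NN h v w th x + v k * (clip (w k * x + th k + t) - clip (w k * x + th k)).
Proof.
  intros Hk. unfold NN, upd.
  replace (Nat.eqb (S h) k) with false by (symmetry; apply Nat.eqb_neq; lia).
  rewrite (sum_change (fun i => if Nat.eqb i 0 then 0 else v i * clip (w i * x + th i)) _ h k).
  - replace (Nat.eqb k 0) with false by (symmetry; apply Nat.eqb_neq; lia).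
    rewrite Nat.eqb_refl. replace (w k * x + (th k + t)) with (w k * x + th k + t) by ring. set (Sm := sum_n _ h). change (th (S h) + (Sm + (v k * clip (w k * x + th k + t) - v k * clip (w k * x + th k))) = th (S h) + Sm + v k * (clip (w k * x + th k + t) - clip (w k * x + th k))). ring.
  - lia.
  - intros i _ Hik. destruct (Nat.eqb i 0); auto.
    replace (Nat.eqb i k) with false by (symmetry; apply Nat.eqb_neq; lia). auto.
Qed.

Lemma cont_eps F x eps : continuity_pt F x -> 0 < eps ->
  exists d, 0 < d /\ forall y, Rabs (y - x) < d -> Rabs (F y - F x) < eps.
Proof.
  intros H He. destruct (H eps He) as [d [Hd Hy]]. exists d; split; auto.
  intros y Hyx. destruct (Req_dec y x). subst. rewrite Rminus_diag, Rabs_R0; auto.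
  apply Hy. split. split; auto. exact I. simpl. unfold R_dist. auto.
Qed.

Lemma bnd_sign_l (G : R -> R) c lo : continuity_pt G c -> lo < c ->
  (forall x, lo < x < c -> 0 < G x) -> 0 <= G c.
Proof.
  intros Hc Hlo H. destruct (Rle_lt_dec 0 (G c)) as [|Hn]; auto.
  destruct (cont_eps G c (- G c) Hc) as [d [Hd Hy]]; [lra|].
  set (x := Rmax lo (c - d/2)).
  assert (lo < (x + c)/2 < c) by (unfold x, Rmax; destruct Rle_dec; lra).
  specialize (H _ H0). specialize (Hy ((x+c)/2)).
  assert (Rabs ((x + c)/2 - c) < d).
  { unfold x, Rmax in *; destruct Rle_dec; rewrite Rabs_left; lra. }
  specialize (Hy H1). rewrite Rabs_lt_between in Hy. lra.
Qed.

Lemma bnd_sign_r (G : R -> R) c hi : continuity_pt G c -> c < hi ->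
  (forall x, c < x < hi -> 0 < G x) -> 0 <= G c.
Proof.
  intros Hc Hlo H. destruct (Rle_lt_dec 0 (G c)) as [|Hn]; auto.
  destruct (cont_eps G c (- G c) Hc) as [d [Hd Hy]]; [lra|].
  set (x := Rmin hi (c + d/2)).
  assert (c < (x + c)/2 < hi) by (unfold x, Rmin; destruct Rle_dec; lra).
  specialize (H _ H0). specialize (Hy ((x+c)/2)).
  assert (Rabs ((x + c)/2 - c) < d).
  { unfold x, Rmin in *; destruct Rle_dec; rewrite Rabs_right; lra. }
  specialize (Hy H1). rewrite Rabs_lt_between in Hy. lra.
Qed.

Lemma integ_bound (H : R -> R) a b al be B1 B2 :
  a < al -> al < be -> be < b -> ex_RInt H a b ->
  (forall x, a < x < b -> H x <= B1) -> (forall x, al < x < be -> H x <= B2) ->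
  RInt H a b <= (al - a) * B1 + (be - al) * B2 + (b - be) * B1.
Proof.
  intros H1 H2 H3 Hex Hb1 Hb2.
  assert (E1 : ex_RInt H a al) by (apply (@ex_RInt_Chasles_1 R_CompleteNormedModule H _ _ b); auto; lra).
  assert (E2 : ex_RInt H al b) by (apply (@ex_RInt_Chasles_2 R_CompleteNormedModule H a); auto; lra).
  assert (E3 : ex_RInt H al be) by (apply (@ex_RInt_Chasles_1 R_CompleteNormedModule H _ _ b); auto; lra).
  assert (E4 : ex_RInt H be b) by (apply (@ex_RInt_Chasles_2 R_CompleteNormedModule H al); auto; lra).
  rewrite <- (RInt_Chasles H a al b) by auto.
  rewrite <- (RInt_Chasles H al be b) by auto.
  assert (I1 : RInt H a al <= RInt (fun _ => B1) a al).
  { apply RInt_le; auto; try lra; try apply ex_RInt_const; try (intros; apply Hb1; lra). }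
  assert (I2 : RInt H al be <= RInt (fun _ => B2) al be).
  { apply RInt_le; auto; try lra; try apply ex_RInt_const; try (intros; apply Hb2; lra). }
  assert (I3 : RInt H be b <= RInt (fun _ => B1) be b).
  { apply RInt_le; auto; try lra; try apply ex_RInt_const; try (intros; apply Hb1; lra). }
  rewrite !RInt_const in *. change (RInt H a al + (RInt H al be + RInt H be b) <=
    (al - a) * B1 + (be - al) * B2 + (b - be) * B1).
  change (RInt H a al <= (al - a) * B1) in I1.
  change (RInt H al be <= (be - al) * B2) in I2.
  change (RInt H be b <= (b - be) * B1) in I3. lra.
Qed.

Lemma clip_aff_cont2 (c d e x : R) : continuity_pt (fun y => clip (c * y + d + e)) x.
Proof.
  apply lip_cont with (Rabs c). apply Rabs_pos.
  intros y. eapply Rle_trans. apply clip_lip.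
  replace (c * y + d + e - (c * x + d + e)) with (c * (y - x)) by ring. rewrite Rabs_mult; lra.
Qed.

Lemma RInt_ext_R (F G : R -> R) a b :
  (forall x, Rmin a b < x < Rmax a b -> F x = G x) -> RInt F a b = RInt G a b.
Proof. apply RInt_ext. Qed.

Lemma RInt_minus_R (F G : R -> R) a b : ex_RInt F a b -> ex_RInt G a b ->
  RInt (fun x => F x - G x) a b = RInt F a b - RInt G a b.
Proof. intros. apply (RInt_minus F G); auto. Qed.

Lemma ex_RInt_minus_R (F G : R -> R) a b : ex_RInt F a b -> ex_RInt G a b ->
  ex_RInt (fun x => F x - G x) a b.
Proof. intros. apply (ex_RInt_minus F G); auto. Qed.

Lemma abs_le_bt x y : Rabs x <= y -> - y <= x <= y.
Proof. unfold Rabs; destruct Rcase_abs; lra. Qed.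
Lemma abs_lt_bt x y : Rabs x < y -> - y < x < y.
Proof. unfold Rabs; destruct Rcase_abs; lra. Qed.

Lemma sum_zero n : sum_n (fun _ => 0) n = 0.
Proof. induction n. rewrite sum_O; auto. rewrite sum_Sn, IHn. change (0 + 0 = 0). ring. Qed.

Lemma last_good (G : R -> R) lo x B : (forall t, continuity_pt G t) ->
  (exists l, lo <= l <= x /\ Rabs (G l) <= B) ->
  exists L, lo <= L <= x /\ Rabs (G L) <= B /\ forall t, L < t <= x -> B < Rabs (G t).
Proof.
  intros HG [l [Hl HGl]].
  set (E := fun t => lo <= t <= x /\ Rabs (G t) <= B).
  destruct (completeness E) as [L [Hub Hlub]].
  { exists x. intros t [Ht _]. lra. }
  { exists l. split; auto. }
  assert (HlL : l <= L) by (apply Hub; split; auto).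
  assert (HLx : L <= x) by (apply Hlub; intros t [Ht _]; lra).
  exists L. split; [lra|]. split.
  - destruct (Rle_dec (Rabs (G L)) B) as [|Hn]; auto. exfalso.
    destruct (cont_eps G L (Rabs (G L) - B) (HG L)) as [d [Hd Hc]]; [lra|].
    assert (L <= L - d); [|lra].
    apply Hlub. intros t [Ht Hgt].
    destruct (Rle_dec t (L - d)) as [|Hn2]; auto. exfalso.
    assert (t <= L) by (apply Hub; split; auto).
    assert (Rabs (t - L) < d) by (unfold Rabs; destruct Rcase_abs; lra).
    specialize (Hc t H0).
    pose proof (Rabs_triang_inv (G L) (G t)).
    replace (G L - G t) with (- (G t - G L)) in H1 by ring. rewrite Rabs_Ropp in H1. lra.
  - intros t Ht. destruct (Rlt_dec B (Rabs (G t))) as [|Hn]; auto. exfalso.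
    assert (t <= L) by (apply Hub; split; [lra|lra]). lra.
Qed.

Lemma lub_ge (E : R -> Prop) M y : E y -> (forall t, E t -> t <= M) -> y <= real (Lub_Rbar E).
Proof.
  intros Hy HM. destruct (Lub_Rbar_correct E) as [Hub Hle].
  assert (H1 : Rbar_le (Lub_Rbar E) M) by (apply Hle; intros t Ht; simpl; auto).
  specialize (Hub y Hy). revert Hub H1. case (Lub_Rbar E); simpl; tauto.
Qed.

Lemma glb_le (E : R -> Prop) M y : E y -> (forall t, E t -> M <= t) -> real (Glb_Rbar E) <= y.
Proof.
  intros Hy HM. destruct (Glb_Rbar_correct E) as [Hlb Hge].
  assert (H1 : Rbar_le M (Glb_Rbar E)) by (apply Hge; intros t Ht; simpl; auto).
  specialize (Hlb y Hy). revert Hlb H1. case (Glb_Rbar E); simpl; tauto.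
Qed.

Section Main.
Variables (a b : R) (h : nat) (v w : nat -> R) (f p : R -> R) (th : nat -> R).
Hypothesis Hab : a < b.
Hypothesis Hvw : forall i, (1 <= i <= h)%nat -> 0 < v i /\ 0 < w i.
Hypothesis Hf : forall x, continuous f x.
Hypothesis Hp : forall x, continuous p x.
Hypothesis Hp0 : forall x, 0 <= p x.
Hypothesis Hpos : forall x, 0 < p x <-> a < x < b.
Hypothesis Hmono : forall x y, x <= y -> f x <= f y.
Hypothesis HLip : forall i, (1 <= i <= h)%nat -> Rbar_lt (Lip a b f) (Finite (v i * w i)).
Hypothesis Hgrad : grad_zero a b h v w f p th.

Definition N := NN h v w th.
Definition g x := N x - f x.
Definition u k x := w k * x + th k.

Lemma f_cont x : continuity_pt f x.
Proof. apply continuity_pt_filterlim, Hf. Qed.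
Lemma p_cont x : continuity_pt p x.
Proof. apply continuity_pt_filterlim, Hp. Qed.
Lemma g_cont x : continuity_pt g x.
Proof. unfold g. apply continuity_pt_minus. apply NN_cont. apply f_cont. Qed.

Lemma u_eq k x : (1 <= k <= h)%nat -> u k x = w k * (x - psi w th k).
Proof. intros Hk. destruct (Hvw k Hk). unfold u, psi. field. lra. Qed.

Lemma inI_u k x : (1 <= k <= h)%nat ->
  (psi w th k < x < psi w th k + / w k <-> 0 < u k x < 1).
Proof.
  intros Hk. destruct (Hvw k Hk) as [Hv Hw]. rewrite u_eq by auto.
  set (q := psi w th k). assert (w k * / w k = 1) by (field; lra).
  assert (0 < / w k) by (apply Rinv_0_lt_compat; lra).
  split; intros [H1 H2]; split; try nra.
Qed.

Lemma N_diff x y : N y - N x =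
  sum_n (fun i => if Nat.eqb i 0 then 0 else v i * (clip (u i y) - clip (u i x))) h.
Proof.
  unfold N, NN.
  replace (th (S h) + sum_n (fun i => if Nat.eqb i 0 then 0 else v i * clip (w i * y + th i)) h -
    (th (S h) + sum_n (fun i => if Nat.eqb i 0 then 0 else v i * clip (w i * x + th i)) h))
  with (sum_n (fun i => if Nat.eqb i 0 then 0 else v i * clip (w i * y + th i)) h -
    sum_n (fun i => if Nat.eqb i 0 then 0 else v i * clip (w i * x + th i)) h) by ring.
  rewrite sum_minus. apply sum_ext_R. intros i _. unfold u. destruct (Nat.eqb i 0); ring.
Qed.

Lemma term_nonneg x y i : x <= y -> (i <= h)%nat ->
  0 <= (if Nat.eqb i 0 then 0 else v i * (clip (u i y) - clip (u i x))).
Proof.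
  intros Hxy Hi. destruct (Nat.eqb i 0) eqn:E. lra.
  apply Nat.eqb_neq in E. destruct (Hvw i) as [Hv Hw]. lia.
  assert (clip (u i x) <= clip (u i y)) by (apply clip_mono; unfold u; nra). nra.
Qed.

Lemma N_mono x y : x <= y -> N x <= N y.
Proof.
  intros H. assert (0 <= N y - N x); [|lra]. rewrite N_diff.
  apply sum_nonneg; intros; apply term_nonneg; auto.
Qed.

Lemma Lip_bound k x y : (1 <= k <= h)%nat -> a <= x -> x < y -> y <= b ->
  f y - f x < v k * w k * (y - x).
Proof.
  intros Hk Hx Hxy Hy.
  set (r := Rabs (f x - f y) / Rabs (x - y)).
  assert (Hr : Rbar_le r (Lip a b f)).
  { destruct (Lub_Rbar_correct (fun r => exists x y, a <= x <= b /\ a <= y <= b /\ x <> y /\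
                                 r = Rabs (f x - f y) / Rabs (x - y))) as [H _].
    apply H. exists x, y. repeat split; try lra. }
  assert (Hr2 : r < v k * w k).
  { pose proof (Rbar_le_lt_trans _ _ _ Hr (HLip k Hk)). simpl in H. auto. }
  unfold r in Hr2. pose proof (Hmono x y (Rlt_le _ _ Hxy)).
  rewrite Rabs_left1 in Hr2 by lra. rewrite Rabs_left in Hr2 by lra.
  replace (- (f x - f y)) with (f y - f x) in Hr2 by ring.
  replace (- (x - y)) with (y - x) in Hr2 by ring.
  apply Rmult_lt_compat_r with (r := y - x) in Hr2; [|lra].
  unfold Rdiv in Hr2. rewrite Rmult_assoc, Rinv_l, Rmult_1_r in Hr2 by lra. lra.
Qed.

Lemma g_strict k x y : (1 <= k <= h)%nat -> inI a b w th k x -> inI a b w th k y -> x < y ->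
  g x < g y.
Proof.
  intros Hk [Hx1 Hx2] [Hy1 Hy2] Hxy.
  apply (inI_u k x Hk) in Hx1. apply (inI_u k y Hk) in Hy1.
  assert (HN : v k * w k * (y - x) <= N y - N x).
  { rewrite N_diff.
    eapply Rle_trans; [| apply (sum_ge_single _ h k)].
    - cbv beta. replace (Nat.eqb k 0) with false by (symmetry; apply Nat.eqb_neq; lia).
      rewrite !clip_id by lra. unfold u; lra.
    - intros; apply term_nonneg; auto; lra.
    - lia. }
  pose proof (Lip_bound k x y Hk ltac:(lra) Hxy ltac:(lra)). unfold g; lra.
Qed.



Lemma integrand_cont k t z :
  continuity_pt (fun x => (g x + v k * (clip (u k x + t) - clip (u k x)))^2 * p x) z.
Proof.
  apply continuity_pt_mult; [| apply p_cont].
  apply (continuity_pt_comp (fun x => g x + v k * (clip (u k x + t) - clip (u k x))) (fun y => y^2)).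
  - apply continuity_pt_plus; [apply g_cont|]. apply continuity_pt_mult.
    apply continuity_pt_const; intros ??; auto.
    unfold u. apply continuity_pt_minus. apply clip_aff_cont2. apply clip_aff_cont.
  - apply derivable_continuous_pt, derivable_pt_pow.
Qed.

Lemma integrand_ex k t :
  ex_RInt (fun x => (g x + v k * (clip (u k x + t) - clip (u k x)))^2 * p x) a b.
Proof.
  apply (@ex_RInt_continuous R_CompleteNormedModule). intros z _. apply continuity_pt_filterlim. apply integrand_cont.
Qed.

Lemma phi_eq k t : (1 <= k <= h)%nat ->
  LL a b h v w f p (upd th k t) =
  RInt (fun x => (g x + v k * (clip (u k x + t) - clip (u k x)))^2 * p x) a b.
Proof.
  intros Hk. unfold LL. apply RInt_ext_R. intros x _. rewrite NN_upd by auto.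
  unfold g, N, u. ring.
Qed.

Lemma no_const_sign k e : (1 <= k <= h)%nat -> (e = 1 \/ e = -1) ->
  (exists y, inI a b w th k y) -> (forall x, inI a b w th k x -> 0 < e * g x) -> False.
Proof.
  intros Hk He [y0 Hy0] Hsg.
  destruct (Hvw k Hk) as [Hv Hw].
  unfold inI in Hy0, Hsg.
  set (ps := psi w th k) in *. set (r := ps + / w k) in *.
  assert (Hwr : w k * / w k = 1) by (field; lra).
  assert (Hu : forall x, u k x = w k * (x - ps)) by (intros; apply u_eq; auto).
  destruct Hy0 as [[Hy1 Hy2] [Hy3 Hy4]].
  assert (HG0 : 0 < e * g y0) by (apply Hsg; lra).
  assert (Hpy0 : 0 < p y0) by (apply Hpos; lra).
  destruct (cont_eps g y0 (e * g y0 / 2) (g_cont y0)) as [d1 [Hd1 Hc1]]; [lra|].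
  destruct (cont_eps p y0 (p y0 / 2) (p_cont y0)) as [d2 [Hd2 Hc2]]; [lra|].
  set (dl := Rmin (Rmin d1 d2) (Rmin (Rmin (y0 - ps) (r - y0)) (Rmin (y0 - a) (b - y0))) / 2).
  assert (Hdl : 0 < dl /\ dl <= d1/2 /\ dl <= d2/2 /\ dl <= (y0-ps)/2 /\ dl <= (r-y0)/2 /\
     dl <= (y0-a)/2 /\ dl <= (b-y0)/2).
  { unfold dl, Rmin; repeat destruct Rle_dec; lra. }
  set (al := y0 - dl). set (be := y0 + dl).
  set (mg := e * g y0 / 2). set (mp := p y0 / 2).
  set (s1 := Rmin (w k * (y0 - ps)) (w k * (r - y0)) / 2).
  assert (Hs1 : 0 < s1 /\ s1 <= w k * (y0 - ps) / 2 /\ s1 <= w k * (r - y0) / 2).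
  { unfold s1, Rmin; destruct Rle_dec; nra. }
  assert (HA : forall x, al <= x <= be ->
     mg <= e * g x /\ mp <= p x /\ s1 <= u k x <= 1 - s1 /\ a < x < b /\ ps < x < r).
  { intros x Hx. unfold al, be in Hx.
    assert (Hxy : Rabs (x - y0) < d1 /\ Rabs (x - y0) < d2).
    { rewrite !Rabs_lt_between; lra. }
    destruct Hxy as [Hx1 Hx2]. specialize (Hc1 x Hx1). specialize (Hc2 x Hx2).
    rewrite Rabs_lt_between in Hc1, Hc2.
    split; [unfold mg; destruct He; subst e; lra|].
    split; [unfold mp; lra|].
    rewrite Hu. split; [|lra]. split.
    - assert (x - ps >= (y0 - ps)/2) by lra. nra.
    - assert (r - x >= (r - y0)/2) by lra.
      assert (w k * (x - ps) = 1 - w k * (r - x)) by (unfold r; field_simplify; try lra).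
      nra. }
  assert (Hmg : 0 < mg) by (unfold mg; lra).
  assert (Hmp : 0 < mp) by (unfold mp; lra).
  destruct (continuity_ab_maj p a b) as [Mx [HM _]]; [lra| intros; apply p_cont |].
  set (P := p Mx) in *.
  assert (HP0 : 0 <= P) by apply Hp0.
  set (K := (be - al) * mg * mp).
  assert (HK : 0 < K) by (unfold K, al, be; apply Rmult_lt_0_compat; [apply Rmult_lt_0_compat|]; lra).
  pose proof (Hgrad k ltac:(lia)) as Hd. apply is_derive_Reals in Hd.
  destruct (Hd (v k * K / 2)) as [dd Hdd]. { apply Rdiv_lt_0_compat; [apply Rmult_lt_0_compat|]; lra. }
  set (eta := K / (4 * (b - a) * P + 1)).
  assert (Heta : 0 < eta /\ 2 * eta * (b - a) * P <= K / 2).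
  { assert (0 <= (b - a) * P) by nra.
    unfold eta. split. apply Rdiv_lt_0_compat; nra.
    apply Rmult_le_reg_r with (4 * (b - a) * P + 1). nra.
    replace (2 * (K / (4 * (b - a) * P + 1)) * (b - a) * P * (4 * (b - a) * P + 1))
      with (2 * K * (b - a) * P) by (field; nra). nra. }
  destruct (cont_eps g r eta (g_cont r)) as [dr [Hdr Hcr]]; [lra|].
  destruct (cont_eps g ps eta (g_cont ps)) as [dp [Hdp Hcp]]; [lra|].
  set (s := Rmin (Rmin s1 (Rmin (w k * dr) (w k * dp))) (Rmin (K / (2 * v k * (b - a) * P + 1)) dd) / 2).
  assert (Hs : 0 < s /\ s <= s1 /\ s < w k * dr /\ s < w k * dp /\ s <= K / (2 * v k * (b - a) * P + 1) /\ s < dd).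
  { assert (0 < w k * dr) by nra. assert (0 < w k * dp) by nra.
    assert (0 < K / (2 * v k * (b - a) * P + 1)).
    { apply Rdiv_lt_0_compat; auto. assert (0 <= v k * ((b - a) * P)) by (apply Rmult_le_pos; [lra| apply Rmult_le_pos; lra]). nra. }
    pose proof (cond_pos dd).
    destruct Hs1 as [Hs1a Hs1b]. unfold s, Rmin; repeat destruct Rle_dec; lra. }
  assert (Hsv : 2 * s * v k * (b - a) * P <= K).
  { destruct Hs as [Hs0 [_ [_ [_ [Hs5 _]]]]].
    assert (0 <= v k * ((b - a) * P)) by (apply Rmult_le_pos; [lra| apply Rmult_le_pos; lra]).
    apply Rmult_le_compat_l with (r := 2 * v k * (b - a) * P + 1) in Hs5; [|nra].
    replace ((2 * v k * (b - a) * P + 1) * (K / (2 * v k * (b - a) * P + 1))) with K in Hs5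
      by (field; nra). nra. }
  destruct Heta as [Heta0 Heta1].
  destruct Hs as [Hs0 [Hs1' [Hsr [Hsp [_ Hsd]]]]].
  assert (Hee : e * e = 1) by (destruct He; subst; lra).
  set (F1 := fun x => (g x + v k * (clip (u k x + - e * s) - clip (u k x)))^2 * p x).
  set (F0 := fun x => (g x + v k * (clip (u k x + 0) - clip (u k x)))^2 * p x).
  assert (Hphi : LL a b h v w f p (upd th k (- e * s)) - LL a b h v w f p (upd th k 0) =
     RInt (fun x => F1 x - F0 x) a b).
  { rewrite !phi_eq by auto. symmetry. apply (RInt_minus_R F1 F0); apply integrand_ex. }
  assert (HD : forall x, - (v k * s) <= v k * (clip (u k x + - e * s) - clip (u k x)) <= v k * s
     /\ e * (v k * (clip (u k x + - e * s) - clip (u k x))) <= 0).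
  { intros x. split.
    - apply abs_le_bt. rewrite Rabs_mult, (Rabs_right (v k)) by lra.
      apply Rmult_le_compat_l; [lra|]. eapply Rle_trans; [apply clip_lip|].
      replace (u k x + - e * s - u k x) with (- e * s) by ring.
      destruct He; subst e; unfold Rabs; destruct Rcase_abs; lra.
    - destruct He; subst e.
      + assert (clip (u k x + - (1) * s) <= clip (u k x)) by (apply clip_mono; lra). nra.
      + assert (clip (u k x) <= clip (u k x + - (-1) * s)) by (apply clip_mono; lra). nra. }
  assert (Hrps : r - ps = / w k) by (unfold r; ring).
  assert (HGD : forall x, a < x < b ->
     g x * (v k * (clip (u k x + - e * s) - clip (u k x))) <= eta * (v k * s)).
  { intros x Hx. destruct (HD x) as [HD1 HD2].
    set (D := v k * (clip (u k x + - e * s) - clip (u k x))) in *.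
    assert (0 <= eta * (v k * s)) by (apply Rmult_le_pos; nra).
    destruct (Rlt_dec ps x) as [Hl|Hl]; [destruct (Rlt_dec x r) as [Hr|Hr]|].
    - assert (0 < e * g x) by (apply Hsg; lra).
      destruct He; subst e; nra.
    -
      assert (Hu1 : 1 <= u k x).
      { rewrite Hu. assert (x - ps >= / w k) by lra. nra. }
      destruct He; subst e.
      + destruct (Rle_dec 1 (u k x + - (1) * s)).
        * assert (HD0 : D = 0) by (unfold D; rewrite !clip_1 by lra; ring). rewrite HD0, Rmult_0_r. lra.
        * assert (Hxr : Rabs (x - r) < dr).
          { assert (w k * (x - r) < w k * dr).
            { replace (w k * (x - r)) with (u k x - 1) by (rewrite Hu; unfold r; field; lra). lra. }
            apply Rmult_lt_reg_l in H0; auto. unfold Rabs; destruct Rcase_abs; lra. }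
          specialize (Hcr x Hxr). apply abs_lt_bt in Hcr.
          assert (Hgr : 0 <= 1 * g r).
          { apply (bnd_sign_l (fun z => 1 * g z) r y0).
            apply continuity_pt_mult. apply continuity_pt_const; intros ??; auto. apply g_cont.
            lra. intros z Hz. apply Hsg. lra. }
          assert (- eta < g x) by lra. nra.
      + assert (HD0 : D = 0) by (unfold D; rewrite !clip_1 by lra; ring). rewrite HD0, Rmult_0_r. lra.
    -
      assert (Hu1 : u k x <= 0) by (rewrite Hu; nra).
      destruct He; subst e.
      + assert (HD0 : D = 0) by (unfold D; rewrite !clip_0 by lra; ring). rewrite HD0, Rmult_0_r. lra.
      + destruct (Rle_dec (u k x + - (-1) * s) 0).
        * assert (HD0 : D = 0) by (unfold D; rewrite !clip_0 by lra; ring). rewrite HD0, Rmult_0_r. lra.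
        * assert (Hxr : Rabs (x - ps) < dp).
          { assert (w k * (ps - x) < w k * dp).
            { replace (w k * (ps - x)) with (- u k x) by (rewrite Hu; ring). lra. }
            apply Rmult_lt_reg_l in H0; auto. unfold Rabs; destruct Rcase_abs; lra. }
          specialize (Hcp x Hxr). apply abs_lt_bt in Hcp.
          assert (Hgr : 0 <= -1 * g ps).
          { apply (bnd_sign_r (fun z => -1 * g z) ps y0).
            apply continuity_pt_mult. apply continuity_pt_const; intros ??; auto. apply g_cont.
            lra. intros z Hz. apply Hsg. lra. }
          assert (g x < eta) by lra. nra. }
  set (B1 := (2 * eta * (v k * s) + (v k * s) ^ 2) * P).
  set (B2 := - 2 * (v k * s) * (mg * mp) + (v k * s) ^ 2 * P).
  assert (HB1 : forall x, a < x < b -> F1 x - F0 x <= B1).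
  { intros x Hx. unfold F1, F0, B1.
    rewrite Rplus_0_r, Rminus_diag, Rmult_0_r, Rplus_0_r.
    pose proof (HGD x Hx) as H1. destruct (HD x) as [[HDa HDb] _].
    set (D := v k * (clip (u k x + - e * s) - clip (u k x))) in *.
    assert (Hpx : 0 <= p x <= P) by (split; [apply Hp0| apply HM; lra]).
    set (X := 2 * (g x * D) + D ^ 2).
    set (Y := 2 * eta * (v k * s) + (v k * s) ^ 2).
    assert (HXY : X <= Y) by (unfold X, Y; nra).
    assert (HY : 0 <= Y) by (unfold Y; nra).
    replace ((g x + D) ^ 2 * p x - g x ^ 2 * p x) with (X * p x) by (unfold X; ring).
    destruct (Rle_dec 0 X); nra. }
  assert (HB2 : forall x, al < x < be -> F1 x - F0 x <= B2).
  { intros x Hx. destruct (HA x ltac:(lra)) as [H1 [H2 [H3 H4]]].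
    unfold F1, F0, B2.
    rewrite Rplus_0_r, Rminus_diag, Rmult_0_r, Rplus_0_r.
    assert (Hpx : p x <= P) by (apply HM; lra).
    assert (Hc : clip (u k x + - e * s) - clip (u k x) = - e * s).
    { rewrite (clip_id (u k x)) by lra. destruct He; subst e; rewrite clip_id by lra; ring. }
    rewrite Hc.
    replace ((g x + v k * (- e * s)) ^ 2 * p x - g x ^ 2 * p x) with
      (- 2 * (v k * s) * ((e * g x) * p x) + (v k * s) ^ 2 * p x * (e * e)) by ring.
    rewrite Hee.
    assert (mg * mp <= (e * g x) * p x) by nra.
    assert (0 < v k * s) by nra.
    assert ((v k * s) ^ 2 * p x <= (v k * s) ^ 2 * P) by (apply Rmult_le_compat_l; nra).
    nra. }
  assert (Hal : a < al) by (unfold al; lra).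
  assert (Hbe : be < b) by (unfold be; lra).
  assert (Halbe : al < be) by (unfold al, be; lra).
  pose proof (integ_bound (fun x => F1 x - F0 x) a b al be B1 B2 Hal Halbe Hbe
    (ex_RInt_minus_R F1 F0 a b (integrand_ex k _) (integrand_ex k _)) HB1 HB2) as HI.
  rewrite <- Hphi in HI.
  specialize (Hdd (- e * s)).
  rewrite Rplus_0_l in Hdd.
  assert (Hne : - e * s <> 0) by (destruct He; subst; lra).
  assert (Hlt : Rabs (- e * s) < dd) by (destruct He; subst; unfold Rabs; destruct Rcase_abs; lra).
  specialize (Hdd Hne Hlt). rewrite Rminus_0_r in Hdd. apply abs_lt_bt in Hdd.
  set (L1 := LL a b h v w f p (upd th k (- e * s))) in *.
  set (L0 := LL a b h v w f p (upd th k 0)) in *.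
  set (q := (L1 - L0) / (- e * s)) in *.
  assert (HLq : L1 - L0 = q * (- e * s)) by (unfold q; field; repeat split; destruct He; subst; lra).
  assert (Hlow : - (v k * K / 2) * s < L1 - L0).
  { rewrite HLq. destruct He; subst e; nra. }
  assert (T1 : (al - a) * B1 + (be - al) * B2 + (b - be) * B1 =
     (b - a - (be - al)) * (2 * eta * (v k * s) * P) + (b - a) * ((v k * s) ^ 2 * P)
     - 2 * (v k * s) * K) by (unfold B1, B2, K; ring).
  assert (Hvs : 0 < v k * s) by nra.
  assert (T2 : (b - a - (be - al)) * (2 * eta * (v k * s) * P) <= (b - a) * (2 * eta * (v k * s) * P)).
  { apply Rmult_le_compat_r; [| lra]. apply Rmult_le_pos; [|lra]. nra. }
  assert (T3 : (b - a) * (2 * eta * (v k * s) * P) <= (v k * s) * (K / 2)).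
  { replace ((b - a) * (2 * eta * (v k * s) * P)) with ((v k * s) * (2 * eta * (b - a) * P)) by ring.
    apply Rmult_le_compat_l; lra. }
  assert (T4 : (b - a) * ((v k * s) ^ 2 * P) <= (v k * s) * (K / 2)).
  { replace ((b - a) * ((v k * s) ^ 2 * P)) with ((v k * s) * ((2 * s * v k * (b - a) * P) / 2)) by (field).
    apply Rmult_le_compat_l; lra. }
  assert (0 < v k * s * K) by (apply Rmult_lt_0_compat; lra).
  assert (- (v k * K / 2) * s = - (v k * s * K) / 2) by field.
  lra.
Qed.

Lemma inI_conv k x1 x2 z : inI a b w th k x1 -> inI a b w th k x2 -> x1 <= z <= x2 ->
  inI a b w th k z.
Proof. unfold inI; intros; lra. Qed.

Lemma g_contf : continuity g.
Proof. intros x; apply g_cont. Qed.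

Lemma zero_between k x1 x2 : inI a b w th k x1 -> inI a b w th k x2 -> x1 < x2 ->
  g x1 * g x2 < 0 -> exists z, inI a b w th k z /\ g z = 0.
Proof.
  intros H1 H2 H12 Hs.
  destruct (Rlt_dec (g x1) 0).
  - assert (0 < g x2) by nra.
    destruct (IVT g x1 x2 g_contf H12 r H) as [z [Hz1 Hz2]].
    exists z; split; auto. apply inI_conv with x1 x2; auto.
  - assert (0 < g x1).
    { destruct (Req_dec (g x1) 0) as [E|E]. rewrite E in Hs; lra. lra. }
    assert (g x2 < 0) by nra.
    assert (Hc : continuity (fun t => - g t)) by (apply continuity_opp, g_contf).
    destruct (IVT (fun t => - g t) x1 x2 Hc H12 ltac:(lra) ltac:(lra)) as [z [Hz1 Hz2]].
    exists z; split. apply inI_conv with x1 x2; auto. lra.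
Qed.

Lemma zero_exists k : (1 <= k <= h)%nat -> (exists y, inI a b w th k y) ->
  exists z, inI a b w th k z /\ g z = 0.
Proof.
  intros Hk [y0 Hy0].
  destruct (Classical_Prop.classic (exists z, inI a b w th k z /\ g z = 0)) as [|Hn]; auto.
  exfalso.
  assert (Hnz : forall z, inI a b w th k z -> g z <> 0) by (intros z Hz Hg; apply Hn; eauto).
  assert (Hsame : forall x, inI a b w th k x -> 0 < g x * g y0).
  { intros x Hx. destruct (Rlt_dec 0 (g x * g y0)) as [|Hc]; auto. exfalso.
    assert (g x * g y0 < 0).
    { pose proof (Hnz x Hx). pose proof (Hnz y0 Hy0).
      destruct (Rlt_dec 0 (g x)); destruct (Rlt_dec 0 (g y0)); nra. }
    destruct (Rtotal_order x y0) as [Hl|[He|Hl]].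
    - destruct (zero_between k x y0 Hx Hy0 Hl H) as [z Hz]. apply Hn; eauto.
    - subst. nra.
    - destruct (zero_between k y0 x Hy0 Hx Hl ltac:(nra)) as [z Hz]. apply Hn; eauto. }
  destruct (Rlt_dec 0 (g y0)).
  - apply (no_const_sign k 1 Hk (or_introl eq_refl) (ex_intro _ y0 Hy0)).
    intros x Hx. specialize (Hsame x Hx). nra.
  - assert (g y0 < 0) by (pose proof (Hnz y0 Hy0); lra).
    apply (no_const_sign k (-1) Hk (or_intror eq_refl) (ex_intro _ y0 Hy0)).
    intros x Hx. specialize (Hsame x Hx). nra.
Qed.

Lemma indI_in j x : inI a b w th j x -> indI a b w th j x = 1.
Proof.
  unfold inI, indI; intros [[H1 H2] [H3 H4]].
  destruct (Rlt_dec _ x); [|lra]. destruct (Rlt_dec x _); [|lra].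
  destruct (Rlt_dec a x); [|lra]. destruct (Rlt_dec x b); [|lra]. auto.
Qed.

Lemma indI_bnd j x : 0 <= indI a b w th j x <= 1.
Proof. unfold indI; repeat destruct Rlt_dec; lra. Qed.

Lemma V_ge z : a < z < b ->
  sum_n (fun j => if Nat.eqb j 0 then 0 else v j * indI a b w th j z) h <= Vsup a b h v w th.
Proof.
  intros Hz. unfold Vsup.
  match goal with |- _ <= real (Lub_Rbar ?E) =>
    destruct (Lub_Rbar_correct E) as [Hub Hle];
    assert (HM : is_ub_Rbar E (sum_n (fun j => if Nat.eqb j 0 then 0 else v j) h));
    [| assert (Hin : E (sum_n (fun j => if Nat.eqb j 0 then 0 else v j * indI a b w th j z) h))];
    [| | specialize (Hle _ HM); specialize (Hub _ Hin); revert Hub Hle; case (Lub_Rbar E)] end.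
  - intros r [x [Hx ->]]. simpl. apply sum_le_loc. intros i Hi.
    destruct (Nat.eqb i 0) eqn:E. lra. apply Nat.eqb_neq in E.
    destruct (Hvw i) as [Hv _]. lia. pose proof (indI_bnd i x). nra.
  - exists z; split; auto.
  - simpl; auto.
  - simpl; tauto.
  - simpl; tauto.
Qed.

Lemma term_bound_r j i x z : (1 <= j <= h)%nat -> (1 <= i <= h)%nat ->
  inI a b w th j x -> inI a b w th j z -> g z = 0 -> z <= x ->
  v i * (clip (u i x) - clip (u i z)) <= v i * indI a b w th i z.
Proof.
  intros Hj Hi Hx Hz Hg0 Hzx.
  destruct (Hvw i Hi) as [Hv Hw].
  assert (Hgx : 0 <= g x).
  { destruct (Rle_lt_or_eq_dec z x Hzx) as [Hl|He]. pose proof (g_strict j z x Hj Hz Hx Hl). lra.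
    subst; lra. }
  destruct (Classical_Prop.classic (inI a b w th i z)) as [HzI|HzI].
  - rewrite indI_in by auto. pose proof (clip_bnd (u i x)). pose proof (clip_bnd (u i z)). nra.
  - pose proof (indI_bnd i z).
    destruct (Rle_dec (clip (u i x)) (clip (u i z))) as [Hc|Hc]; [nra|]. exfalso.
    assert (Huz : u i z < 1).
    { destruct (Rlt_dec (u i z) 1); auto. rewrite (clip_1 (u i z)) in Hc by lra.
      pose proof (clip_bnd (u i x)); lra. }
    assert (Hux : 0 < u i x).
    { destruct (Rlt_dec 0 (u i x)); auto. rewrite (clip_0 (u i x)) in Hc by lra.
      pose proof (clip_bnd (u i z)); lra. }
    assert (Huz0 : u i z <= 0).
    { destruct (Rle_dec (u i z) 0); auto. exfalso. apply HzI. split.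
      apply (inI_u i z Hi). lra. destruct Hz; auto. }
    rewrite !u_eq in * by auto.
    set (ps := psi w th i) in *.
    assert (Hwr : w i * / w i = 1) by (field; lra).
    assert (Hps : z <= ps) by nra. assert (Hxps : ps < x) by nra.
    set (t := ps + Rmin (x - ps) (/ w i) / 2).
    assert (Hinv : 0 < / w i) by (apply Rinv_0_lt_compat; lra).
    assert (Ht : ps < t < x /\ t < ps + / w i) by (unfold t, Rmin; destruct Rle_dec; lra).
    assert (HtI : inI a b w th i t) by (destruct Hx, Hz; split; [fold ps|]; lra).
    destruct (zero_exists i Hi (ex_intro _ t HtI)) as [zi [Hzi Hgzi]].
    assert (Hzi' := Hzi). destruct Hzi' as [[Hz1 Hz2] _]. fold ps in Hz1, Hz2.
    destruct (Rle_dec zi x).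
    + assert (Hlt : z < zi) by lra.
      assert (HjI : inI a b w th j zi) by (apply inI_conv with z x; auto; lra).
      pose proof (g_strict j z zi Hj Hz HjI Hlt). lra.
    + assert (HxI : inI a b w th i x) by (destruct Hx; split; [fold ps|]; lra).
      pose proof (g_strict i x zi Hi HxI Hzi ltac:(lra)). lra.
Qed.

Lemma term_bound_l j i x z : (1 <= j <= h)%nat -> (1 <= i <= h)%nat ->
  inI a b w th j x -> inI a b w th j z -> g z = 0 -> x <= z ->
  v i * (clip (u i z) - clip (u i x)) <= v i * indI a b w th i z.
Proof.
  intros Hj Hi Hx Hz Hg0 Hzx.
  destruct (Hvw i Hi) as [Hv Hw].
  assert (Hgx : g x <= 0).
  { destruct (Rle_lt_or_eq_dec x z Hzx) as [Hl|He]. pose proof (g_strict j x z Hj Hx Hz Hl). lra.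
    subst; lra. }
  destruct (Classical_Prop.classic (inI a b w th i z)) as [HzI|HzI].
  - rewrite indI_in by auto. pose proof (clip_bnd (u i x)). pose proof (clip_bnd (u i z)). nra.
  - pose proof (indI_bnd i z).
    destruct (Rle_dec (clip (u i z)) (clip (u i x))) as [Hc|Hc]; [nra|]. exfalso.
    assert (Huz : u i x < 1).
    { destruct (Rlt_dec (u i x) 1); auto. rewrite (clip_1 (u i x)) in Hc by lra.
      pose proof (clip_bnd (u i z)); lra. }
    assert (Hux : 0 < u i z).
    { destruct (Rlt_dec 0 (u i z)); auto. rewrite (clip_0 (u i z)) in Hc by lra.
      pose proof (clip_bnd (u i x)); lra. }
    assert (Huz0 : 1 <= u i z).
    { destruct (Rle_dec 1 (u i z)); auto. exfalso. apply HzI. split.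
      apply (inI_u i z Hi). lra. destruct Hz; auto. }
    rewrite !u_eq in * by auto.
    set (ps := psi w th i) in *.
    assert (Hwr : w i * / w i = 1) by (field; lra).
    assert (Hinv : 0 < / w i) by (apply Rinv_0_lt_compat; lra).
    set (r := ps + / w i) in *.
    assert (Hr1 : w i * (r - ps) = 1) by (unfold r; field; lra).
    assert (E1 : w i * (z - r) = w i * (z - ps) - w i * (r - ps)) by ring.
    assert (E2 : w i * (x - r) = w i * (x - ps) - w i * (r - ps)) by ring.
    assert (Hps : r <= z).
    { destruct (Rle_dec r z); auto. assert (w i * (r - z) > 0) by (apply Rmult_gt_0_compat; lra). lra. }
    assert (Hxps : x < r).
    { destruct (Rlt_dec x r); auto. assert (w i * (x - r) >= 0) by (apply Rle_ge, Rmult_le_pos; lra). lra. }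
    assert (Hrdef : r = ps + / w i) by reflexivity.
    set (t := r - Rmin (r - x) (/ w i) / 2).
    assert (Ht : x < t < r /\ ps < t) by (unfold t, Rmin; destruct Rle_dec; lra).
    assert (HtI : inI a b w th i t) by (destruct Hx, Hz; split; [fold ps; fold r|]; lra).
    destruct (zero_exists i Hi (ex_intro _ t HtI)) as [zi [Hzi Hgzi]].
    assert (Hzi' := Hzi). destruct Hzi' as [[Hz1 Hz2] _]. fold ps r in Hz1, Hz2.
    destruct (Rle_dec x zi).
    + assert (Hlt : zi < z) by lra.
      assert (HjI : inI a b w th j zi) by (apply inI_conv with x z; auto; lra).
      pose proof (g_strict j zi z Hj HjI Hz Hlt). lra.
    + assert (HxI : inI a b w th i x) by (destruct Hx; split; [fold ps; fold r|]; lra).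
      pose proof (g_strict i zi x Hi Hzi HxI ltac:(lra)). lra.
Qed.

Lemma part_i j x : (1 <= j <= h)%nat -> inI a b w th j x -> Rabs (g x) <= Vsup a b h v w th.
Proof.
  intros Hj Hx.
  destruct (zero_exists j Hj (ex_intro _ x Hx)) as [z [Hz Hgz]].
  assert (Hzab : a < z < b) by (destruct Hz; lra).
  eapply Rle_trans; [| apply (V_ge z Hzab)].
  destruct (Rle_dec z x) as [Hzx|Hzx].
  - assert (Hgx : 0 <= g x).
    { destruct (Rle_lt_or_eq_dec z x Hzx) as [Hl|He]. pose proof (g_strict j z x Hj Hz Hx Hl). lra.
      subst; lra. }
    rewrite Rabs_right by lra.
    assert (Hff : f z <= f x) by (apply Hmono; auto).
    assert (HN : N x - N z <= sum_n (fun j => if Nat.eqb j 0 then 0 else v j * indI a b w th j z) h).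
    { rewrite N_diff. apply sum_le_loc. intros i Hi.
      destruct (Nat.eqb i 0) eqn:E. lra. apply Nat.eqb_neq in E.
      apply (term_bound_r j i x z); auto; lia. }
    unfold g in *. lra.
  - assert (Hgx : g x < 0) by (pose proof (g_strict j x z Hj Hx Hz ltac:(lra)); lra).
    rewrite Rabs_left by lra.
    assert (Hff : f x <= f z) by (apply Hmono; lra).
    assert (HN : N z - N x <= sum_n (fun j => if Nat.eqb j 0 then 0 else v j * indI a b w th j z) h).
    { rewrite N_diff. apply sum_le_loc. intros i Hi.
      destruct (Nat.eqb i 0) eqn:E. lra. apply Nat.eqb_neq in E.
      apply (term_bound_l j i x z); auto; try lia; lra. }
    unfold g in *. lra.
Qed.

Lemma gap x B : a <= x <= b ->
  (forall j y, (1 <= j <= h)%nat -> inI a b w th j y -> Rabs (g y) <= B) ->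
  (exists l, a <= l <= x /\ Rabs (g l) <= B) ->
  (exists r, x <= r <= b /\ Rabs (g r) <= B) -> Rabs (g x) <= B.
Proof.
  intros Hx HI Hl [r0 [Hr0 Hgr0]].
  destruct (Rle_dec (Rabs (g x)) B) as [|Hgx]; auto. exfalso.
  destruct (last_good g a x B g_cont Hl) as [L [HL1 [HL2 HL3]]].
  assert (Hc' : forall t, continuity_pt (fun t => g (- t)) t).
  { intros t. apply (continuity_pt_comp (fun t => - t) g). apply continuity_pt_opp.
    apply continuity_pt_id. apply g_cont. }
  destruct (last_good (fun t => g (- t)) (- b) (- x) B Hc') as [L' [HR1 [HR2 HR3]]].
  { exists (- r0). split. lra. rewrite Ropp_involutive; auto. }
  set (R := - L') in *.
  assert (HRg : Rabs (g R) <= B) by (unfold R; auto).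
  assert (HRb : R <= b) by (unfold R; lra).
  assert (HLx : L < x) by (destruct (Rle_lt_or_eq_dec L x (proj2 HL1)) as [|E]; auto; subst; lra).
  assert (HxR : x < R).
  { destruct (Rle_lt_or_eq_dec L' (- x) (proj2 HR1)) as [|E]; [unfold R; lra|].
    exfalso. apply Hgx. replace x with R by (unfold R; rewrite E; ring). auto. }
  assert (Hmid : forall t, L < t < R -> B < Rabs (g t)).
  { intros t Ht. destruct (Rle_dec t x). apply HL3; lra.
    specialize (HR3 (- t)). rewrite Ropp_involutive in HR3. apply HR3. unfold R in *; lra. }
  assert (HNLR : N R <= N L).
  { assert (N R - N L <= 0); [|lra]. rewrite N_diff. apply Rle_trans with (sum_n (fun _ => 0) h); [| rewrite sum_zero; lra]. apply sum_le_loc.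
    intros i Hi. destruct (Nat.eqb i 0) eqn:E. lra. apply Nat.eqb_neq in E.
    assert (Hi' : (1 <= i <= h)%nat) by lia. destruct (Hvw i Hi') as [Hv Hw].
    assert (HuLR : u i L < u i R) by (unfold u; nra).
    destruct (Rle_dec 1 (u i L)).
    { rewrite !clip_1 by lra. lra. }
    destruct (Rle_dec (u i R) 0).
    { rewrite !clip_0 by lra. lra. }
    exfalso.
    set (m := (Rmax (u i L) 0 + Rmin (u i R) 1) / 2).
    assert (Hm : 0 < m < 1 /\ u i L < m < u i R) by (unfold m, Rmax, Rmin; repeat destruct Rle_dec; lra).
    set (t := (m - th i) / w i).
    assert (Hut : u i t = m) by (unfold u, t; field; lra).
    assert (HtLR : L < t < R).
    { unfold u in Hm, Hut. split; nra. }
    apply (Rlt_irrefl B). apply Rlt_le_trans with (Rabs (g t)). apply Hmid; auto.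
    apply (HI i); auto. split. apply (inI_u i t Hi'). lra. lra. }
  pose proof (N_mono L x ltac:(lra)). pose proof (N_mono x R ltac:(lra)).
  pose proof (Hmono L x ltac:(lra)). pose proof (Hmono x R ltac:(lra)).
  assert (g R <= g x <= g L) by (unfold g; lra).
  apply abs_le_bt in HL2. apply abs_le_bt in HRg.
  apply Hgx. unfold Rabs; destruct Rcase_abs; lra.
Qed.

Lemma supI_ge j y : inI a b w th j y -> y <= supI a b w th j.
Proof. intros Hy. unfold supI. apply lub_ge with b; auto. intros t [_ Ht]; lra. Qed.
Lemma infI_le j y : inI a b w th j y -> infI a b w th j <= y.
Proof. intros Hy. unfold infI. apply glb_le with a; auto. intros t [_ Ht]; lra. Qed.

Lemma main_conj :
  let V := Vsup a b h v w th in
  let N := NN h v w th in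
  (forall j x, (1 <= j <= h)%nat -> inI a b w th j x ->
     Rabs (N x - f x) <= V) /\
  (forall j k x, (1 <= j <= h)%nat -> (1 <= k <= h)%nat ->
     (exists y, inI a b w th j y) -> (exists y, inI a b w th k y) ->
     supI a b w th j <= x <= infI a b w th k ->
     Rabs (N x - f x) <= V) /\
  (forall j x, (1 <= j <= h)%nat -> (exists y, inI a b w th j y) ->
     supI a b w th j <= x <= b ->
     Rabs (N x - f x) <= Rmax V (Rabs (f b - N b))) /\
  (forall j x, (1 <= j <= h)%nat -> (exists y, inI a b w th j y) ->
     a <= x <= infI a b w th j ->
     Rabs (N x - f x) <= Rmax V (Rabs (f a - N a))).
Proof.
  intros V N0.
  assert (HN0 : forall x, N0 x - f x = g x) by reflexivity.
  assert (HI : forall j y, (1 <= j <= h)%nat -> inI a b w th j y -> Rabs (g y) <= V)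
    by (intros; apply part_i with j; auto).
  split; [|split; [|split]].
  - intros j x Hj Hx. rewrite HN0. apply (HI j x Hj Hx).
  - intros j k x Hj Hk [y1 Hy1] [y2 Hy2] Hx. rewrite HN0.
    pose proof (supI_ge j y1 Hy1). pose proof (infI_le k y2 Hy2).
    pose proof Hy1 as [_ H1]. pose proof Hy2 as [_ H2].
    apply gap; auto. lra.
    exists y1; split; [lra| apply (HI j); auto].
    exists y2; split; [lra| apply (HI k); auto].
  - intros j x Hj [y1 Hy1] Hx. rewrite HN0.
    assert (E : Rabs (f b - N0 b) = Rabs (g b)) by (rewrite Rabs_minus_sym; reflexivity).
    rewrite E.
    pose proof (supI_ge j y1 Hy1). pose proof Hy1 as [_ H1].
    apply gap. lra.
    intros; eapply Rle_trans; [apply (HI j0); auto| apply Rmax_l].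
    exists y1; split; [lra| eapply Rle_trans; [apply (HI j); auto| apply Rmax_l]].
    exists b; split; [lra| apply Rmax_r].
  - intros j x Hj [y1 Hy1] Hx. rewrite HN0.
    assert (E : Rabs (f a - N0 a) = Rabs (g a)) by (rewrite Rabs_minus_sym; reflexivity).
    rewrite E.
    pose proof (infI_le j y1 Hy1). pose proof Hy1 as [_ H1].
    apply gap. lra.
    intros; eapply Rle_trans; [apply (HI j0); auto| apply Rmax_l].
    exists a; split; [lra| apply Rmax_r].
    exists y1; split; [lra| eapply Rle_trans; [apply (HI j); auto| apply Rmax_l]].
Qed.
End Main.

Theorem lemma2p12 (a b : R) (h : nat) (v w : nat -> R) (f p : R -> R)
  (vartheta : nat -> R) :
  a < b ->
  (1 <= h)%nat ->
  (forall i, (1 <= i <= h)%nat -> 0 < v i /\ 0 < w i) ->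
  (forall x, continuous f x) ->
  (forall x, continuous p x) ->
  (forall x, 0 <= p x) ->
  (forall x, 0 < p x <-> a < x < b) ->
  (forall x y, x <= y -> f x <= f y) ->
  (forall i, (1 <= i <= h)%nat -> Rbar_lt (Lip a b f) (Finite (v i * w i))) ->
  grad_zero a b h v w f p vartheta ->
  let V := Vsup a b h v w vartheta in
  let N := NN h v w vartheta in
  (* (i) *)
  (forall j x, (1 <= j <= h)%nat -> inI a b w vartheta j x ->
     Rabs (N x - f x) <= V) /\
  (* (ii) *)
  (forall j k x, (1 <= j <= h)%nat -> (1 <= k <= h)%nat ->
     (exists y, inI a b w vartheta j y) -> (exists y, inI a b w vartheta k y) ->
     supI a b w vartheta j <= x <= infI a b w vartheta k ->
     Rabs (N x - f x) <= V) /\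
  (* (iii) *)
  (forall j x, (1 <= j <= h)%nat -> (exists y, inI a b w vartheta j y) ->
     supI a b w vartheta j <= x <= b ->
     Rabs (N x - f x) <= Rmax V (Rabs (f b - N b))) /\
  (* (iv) *)
  (forall j x, (1 <= j <= h)%nat -> (exists y, inI a b w vartheta j y) ->
     a <= x <= infI a b w vartheta j ->
     Rabs (N x - f x) <= Rmax V (Rabs (f a - N a))).
Proof.
  intros Hab Hh Hvw Hf Hp Hp0 Hpos Hmono HLip Hgrad.
  exact (main_conj a b h v w f p vartheta Hab Hvw Hf Hp Hp0 Hpos Hmono HLip Hgrad).
Qed.
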